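(* Let $1<R<\infty$, $\mathbb A=A(1,R)$, $h\in\mathcal H(\mathbb A,\ast)$, and $U(\rho)=\frac1{2\pi\rho}\int_{|z|=\rho}|h|^2|dz|$ for $1<\rho<R$. Then $\rho\mapsto\rho\,\dot U(\rho)$ is strictly increasing on $(1,R)$, $U(\rho)>1$ for $1<\rho<R$, the limit $\dot U(1):=\lim_{\rho\searrow1}\rho\,\dot U(\rho)$ exists and satisfies $0\leqslant\dot U(1)<\infty$, and for every $1<\rho<R$ $$\frac1\pi\iint_{A(1,\rho)}|Dh|^2=\rho\,\dot U(\rho)-\dot U(1)<\infty .$$
   Context: $A(a,b)=\{a<|z|<b\}$. $\mathcal H(\mathbb A,\ast)$ denotes the set of sense-preserving harmonic homeomorphisms $h$ of $\mathbb A=A(1,R)$ onto some doubly connected domain whose inner boundary is the unit circle (the bounded complementary component is the closed unit disk), preserving the order of boundary components; in particular $|h(z)|\to1$ as $|z|\searrow1$. $\dot U$ is the derivative in $\rho$; $|Dh|^2=2(|h_z|^2+|h_{\bar z}|^2)$. *)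

(* Defs.v *)
From Stdlib Require Import Reals Lra ClassicalEpsilon.
Open Scope R_scope.

(* Riemann integral of f over [a,b] (a <= b); returns 0 if f is not
   Riemann integrable (never the case below: all integrands are continuous). *)
Definition Rint (f : R -> R) (a b : R) : R :=
  match excluded_middle_informative
          (exists pr : Riemann_integrable f a b, True) with
  | left H => RiemannInt (proj1_sig (constructive_indefinite_description _ H))
  | right _ => 0
  end.

(* Points of the plane are pairs (x,y), z = x + i y; a map h = u + i v. *)
Definition ann (a b : R) (x y : R) : Prop :=
  a < sqrt (x ^ 2 + y ^ 2) < b.

Definition pd_x (D : R -> R -> Prop) (f fx : R -> R -> R) : Prop :=
  forall x y, D x y -> derivable_pt_lim (fun t => f t y) x (fx x y).
Definition pd_y (D : R -> R -> Prop) (f fy : R -> R -> R) : Prop :=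
  forall x y, D x y -> derivable_pt_lim (fun t => f x t) y (fy x y).

Definition cont2 (D : R -> R -> Prop) (f : R -> R -> R) : Prop :=
  forall x y, D x y -> forall eps, 0 < eps -> exists delta, 0 < delta /\
    forall x' y', D x' y' -> (x' - x) ^ 2 + (y' - y) ^ 2 < delta ^ 2 ->
      Rabs (f x' y' - f x y) < eps.

Definition C2_harmonic (D : R -> R -> Prop) (f fx fy : R -> R -> R) : Prop :=
  pd_x D f fx /\ pd_y D f fy /\ cont2 D f /\ cont2 D fx /\ cont2 D fy /\
  exists fxx fxy fyx fyy : R -> R -> R,
    pd_x D fx fxx /\ pd_y D fx fxy /\ pd_x D fy fyx /\ pd_y D fy fyy /\
    cont2 D fxx /\ cont2 D fxy /\ cont2 D fyx /\ cont2 D fyy /\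
    (forall x y, D x y -> fxx x y + fyy x y = 0).

(* h = u + i v belongs to H(A(1,Rr), * ); ux uy vx vy are its partials. *)
Definition in_H_star (Rr : R) (u v ux uy vx vy : R -> R -> R) : Prop :=
  let A := ann 1 Rr in
  C2_harmonic A u ux uy /\ C2_harmonic A v vx vy /\
  (forall x y x' y', A x y -> A x' y' ->
      u x y = u x' y' -> v x y = v x' y' -> x = x' /\ y = y') /\
  (* inverse continuous: homeomorphism onto its image *)
  (forall x y, A x y -> forall eps, 0 < eps -> exists delta, 0 < delta /\
     forall x' y', A x' y' ->
       (u x' y' - u x y) ^ 2 + (v x' y' - v x y) ^ 2 < delta ^ 2 ->
       (x' - x) ^ 2 + (y' - y) ^ 2 < eps ^ 2) /\
  (* sense-preserving: positive Jacobian *)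
  (forall x y, A x y -> ux x y * vy x y - uy x y * vx x y > 0) /\
  (forall x y, A x y -> 1 < sqrt (u x y ^ 2 + v x y ^ 2)) /\
  (* order of boundary components: |h(z)| -> 1 as |z| -> 1+ *)
  (forall eps, 0 < eps -> exists delta, 0 < delta /\
     forall x y, A x y -> sqrt (x ^ 2 + y ^ 2) < 1 + delta ->
       Rabs (sqrt (u x y ^ 2 + v x y ^ 2) - 1) < eps).

(* U(rho) = (1/(2 pi rho)) int_{|z|=rho} |h|^2 |dz| *)
Definition U_mean (u v : R -> R -> R) (rho : R) : R :=
  / (2 * PI) * Rint (fun t => u (rho * cos t) (rho * sin t) ^ 2
                              + v (rho * cos t) (rho * sin t) ^ 2) 0 (2 * PI).

(* |Dh|^2 = 2(|h_z|^2 + |h_zbar|^2) = ux^2 + uy^2 + vx^2 + vy^2 *)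
Definition Dh2 (ux uy vx vy : R -> R -> R) (x y : R) : R :=
  ux x y ^ 2 + uy x y ^ 2 + vx x y ^ 2 + vy x y ^ 2.

(* (1/pi) * integral of |Dh|^2 over A(a,rho), in polar coordinates *)
Definition area_int (ux uy vx vy : R -> R -> R) (a rho : R) : R :=
  / PI * Rint (fun r => r * Rint (fun t => Dh2 ux uy vx vy (r * cos t) (r * sin t))
                                  0 (2 * PI)) a rho.

(* Main.v *)
Require Import Defs.
From Stdlib Require Import Reals Lra Psatz Classical ClassicalEpsilon FunctionalExtensionality.
Open Scope R_scope.


Lemma Rint_eq {f a b} (pr : Riemann_integrable f a b) : Rint f a b = RiemannInt pr.
Proof.
  unfold Rint; destruct excluded_middle_informative as [H|H].
  - apply RiemannInt_P5.
  - exfalso; apply H; exists pr; auto.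
Qed.

Definition contab (f : R -> R) a b := forall x, a <= x <= b -> continuity_pt f x.

Lemma contab_int {f a b} : a <= b -> contab f a b -> Riemann_integrable f a b.
Proof. intros; apply continuity_implies_RiemannInt; auto. Qed.

Lemma Rint_lin f g a b l : a <= b -> contab f a b -> contab g a b ->
  Rint (fun x => f x + l * g x) a b = Rint f a b + l * Rint g a b.
Proof.
  intros Hab Hf Hg.
  pose proof (contab_int Hab Hf) as pf. pose proof (contab_int Hab Hg) as pg.
  rewrite (Rint_eq pf), (Rint_eq pg), (Rint_eq (RiemannInt_P10 l pf pg)).
  apply RiemannInt_P13.
Qed.

Lemma Rint_le f g a b : a <= b -> contab f a b -> contab g a b ->
  (forall x, a <= x <= b -> f x <= g x) -> Rint f a b <= Rint g a b.
Proof.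
  intros Hab Hf Hg H.
  rewrite (Rint_eq (contab_int Hab Hf)), (Rint_eq (contab_int Hab Hg)).
  apply RiemannInt_P19; auto. intros; apply H; lra.
Qed.

Lemma Rint_const c a b : Rint (fun _ => c) a b = c * (b - a).
Proof.
  change (fun _ : R => c) with (fct_cte c).
  rewrite (Rint_eq (RiemannInt_P14 a b c)). apply RiemannInt_P15.
Qed.

Lemma Rint_bound f a b M : a <= b -> contab f a b ->
  (forall x, a <= x <= b -> Rabs (f x) <= M) -> Rabs (Rint f a b) <= M * (b - a).
Proof.
  intros Hab Hf H.
  pose proof (contab_int Hab Hf) as pf.
  rewrite (Rint_eq pf).
  eapply Rle_trans. apply (RiemannInt_P17 pf (RiemannInt_P16 pf) Hab).
  pose proof (RiemannInt_const_bound (RiemannInt_P16 pf) (l:=-M) (u:=M) Hab) as K.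
  refine (proj2 (K _)). intros x Hx. pose proof (H x ltac:(lra)). pose proof (Rabs_pos (f x)). lra.
Qed.

Lemma contab_plus f g a b : contab f a b -> contab g a b -> contab (fun x => f x + g x) a b.
Proof. intros Hf Hg x Hx. apply (continuity_pt_plus f g); auto. Qed.
Lemma contab_mult f g a b : contab f a b -> contab g a b -> contab (fun x => f x * g x) a b.
Proof. intros Hf Hg x Hx. apply (continuity_pt_mult f g); auto. Qed.
Lemma contab_const c a b : contab (fun _ => c) a b.
Proof. intros x Hx. apply continuity_pt_const. intros ? ?; auto. Qed.

Lemma Rint_scal f a b l : a <= b -> contab f a b -> Rint (fun x => l * f x) a b = l * Rint f a b.
Proof.
  intros Hab Hf. transitivity (Rint (fun x => 0 + l * f x) a b).
  - f_equal. apply functional_extensionality_dep; intros; ring.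
  - rewrite Rint_lin; auto. rewrite Rint_const; ring. apply contab_const.
Qed.


Lemma FTC_gen f f' a b : a <= b -> (forall x, a <= x <= b -> derivable_pt_lim f x (f' x)) ->
  contab f' a b -> Rint f' a b = f b - f a.
Proof.
  intros Hab Hd Hc.
  rewrite (Rint_eq (contab_int Hab Hc)).
  rewrite (RiemannInt_P20 Hab (FTC_P1 Hab Hc)).
  assert (A1 := RiemannInt_P29 Hab Hc).
  assert (A2 : antiderivative f' f a b).
  { split; auto. intros x Hx. exists (exist _ (f' x) (Hd x Hx)). reflexivity. }
  destruct (antiderivative_Ucte _ _ _ _ _ A1 A2) as [c Hc'].
  rewrite (Hc' b), (Hc' a); lra.
Qed.

Lemma MVT_gen g g' a b : (forall c, Rmin a b <= c <= Rmax a b -> derivable_pt_lim g c (g' c)) ->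
  exists c, Rmin a b <= c <= Rmax a b /\ g b - g a = g' c * (b - a).
Proof.
  intros H. destruct (Rtotal_order a b) as [Hab|[Hab|Hab]].
  - destruct (MVT_cor2 g g' a b Hab) as [c [Hc1 Hc2]].
    + intros c Hc; apply H. rewrite Rmin_left, Rmax_right; lra.
    + exists c; rewrite Rmin_left, Rmax_right; lra.
  - subst. exists b. rewrite Rmin_left, Rmax_left; lra.
  - destruct (MVT_cor2 g g' b a Hab) as [c [Hc1 Hc2]].
    + intros c Hc; apply H. rewrite Rmin_right, Rmax_left; lra.
    + exists c; split. rewrite Rmin_right, Rmax_left; lra. lra.
Qed.

Lemma cos_lip x y : Rabs (cos x - cos y) <= Rabs (x - y).
Proof.
  destruct (MVT_gen cos (fun t => - sin t) y x) as [c [_ Hc]].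
  { intros; apply derivable_pt_lim_cos. }
  rewrite Hc, Rabs_mult. pose proof (SIN_bound c).
  rewrite <- (Rmult_1_l (Rabs (x - y))) at 2. apply Rmult_le_compat_r. apply Rabs_pos.
  rewrite Rabs_Ropp. apply Rabs_le; lra.
Qed.

Lemma sin_lip x y : Rabs (sin x - sin y) <= Rabs (x - y).
Proof.
  destruct (MVT_gen sin cos y x) as [c [_ Hc]].
  { intros; apply derivable_pt_lim_sin. }
  rewrite Hc, Rabs_mult. pose proof (COS_bound c).
  rewrite <- (Rmult_1_l (Rabs (x - y))) at 2. apply Rmult_le_compat_r. apply Rabs_pos.
  apply Rabs_le; lra.
Qed.


Definition JC (G : R -> R -> R) r0 t0 := forall eps, 0 < eps -> exists delta, 0 < delta /\
  forall r t, Rabs (r - r0) < delta -> Rabs (t - t0) < delta -> Rabs (G r t - G r0 t0) < eps.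

Lemma JC_plus G H r0 t0 : JC G r0 t0 -> JC H r0 t0 -> JC (fun r t => G r t + H r t) r0 t0.
Proof.
  intros HG HH eps Heps.
  destruct (HG (eps/2)) as [d1 [Hd1 P1]]; [lra|].
  destruct (HH (eps/2)) as [d2 [Hd2 P2]]; [lra|].
  exists (Rmin d1 d2); split. apply Rmin_pos; auto.
  intros r t Hr Ht. pose proof (Rmin_l d1 d2); pose proof (Rmin_r d1 d2).
  specialize (P1 r t ltac:(lra) ltac:(lra)). specialize (P2 r t ltac:(lra) ltac:(lra)).
  replace (G r t + H r t - (G r0 t0 + H r0 t0)) with ((G r t - G r0 t0) + (H r t - H r0 t0)) by ring.
  eapply Rle_lt_trans. apply Rabs_triang. lra.
Qed.

Lemma JC_mult G H r0 t0 : JC G r0 t0 -> JC H r0 t0 -> JC (fun r t => G r t * H r t) r0 t0.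
Proof.
  intros HG HH eps Heps.
  set (g0 := G r0 t0). set (h0 := H r0 t0).
  assert (Pg : 0 < Rabs g0 + 1) by (pose proof (Rabs_pos g0); lra).
  assert (Ph : 0 < Rabs h0 + 1) by (pose proof (Rabs_pos h0); lra).
  destruct (HG (eps / (2 * (Rabs h0 + 1)))) as [d1 [Hd1 P1]].
  { apply Rdiv_lt_0_compat; lra. }
  destruct (HH (Rmin 1 (eps / (2 * (Rabs g0 + 1))))) as [d2 [Hd2 P2]].
  { apply Rmin_pos; [lra|]. apply Rdiv_lt_0_compat; lra. }
  exists (Rmin d1 d2); split. apply Rmin_pos; auto.
  intros r t Hr Ht. pose proof (Rmin_l d1 d2); pose proof (Rmin_r d1 d2).
  specialize (P1 r t ltac:(lra) ltac:(lra)). specialize (P2 r t ltac:(lra) ltac:(lra)).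
  fold g0 h0 in P1, P2 |- *.
  pose proof (Rmin_l 1 (eps / (2 * (Rabs g0 + 1)))).
  pose proof (Rmin_r 1 (eps / (2 * (Rabs g0 + 1)))).
  replace (G r t * H r t - g0 * h0) with ((G r t - g0) * H r t + g0 * (H r t - h0)) by ring.
  eapply Rle_lt_trans. apply Rabs_triang. rewrite !Rabs_mult.
  assert (E1 : Rabs (H r t) <= Rabs h0 + 1).
  { replace (H r t) with (h0 + (H r t - h0)) by ring.
    eapply Rle_trans. apply Rabs_triang. lra. }
  assert (E2 : Rabs (G r t - g0) * Rabs (H r t) <= eps / 2).
  { apply Rle_trans with (eps / (2 * (Rabs h0 + 1)) * (Rabs h0 + 1)).
    apply Rmult_le_compat; try apply Rabs_pos; lra.
    right; field; lra. }
  assert (E3 : Rabs g0 * Rabs (H r t - h0) < eps / 2).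
  { apply Rle_lt_trans with (Rabs g0 * (eps / (2 * (Rabs g0 + 1)))).
    apply Rmult_le_compat_l; [apply Rabs_pos|lra].
    apply Rmult_lt_reg_r with (Rabs g0 + 1); auto.
    replace (Rabs g0 * (eps / (2 * (Rabs g0 + 1))) * (Rabs g0 + 1)) with (Rabs g0 * (eps/2)) by (field; lra).
    pose proof (Rabs_pos g0). nra. }
  lra.
Qed.

Lemma JC_const c r0 t0 : JC (fun _ _ => c) r0 t0.
Proof.
  intros eps Heps. exists 1; split; [lra|]. intros. unfold Rminus; rewrite Rplus_opp_r, Rabs_R0; auto.
Qed.

Lemma JC_r r0 t0 : JC (fun r _ => r) r0 t0.
Proof. intros eps Heps. exists eps; split; auto. Qed.

Lemma JC_t (f : R -> R) r0 t0 : continuity_pt f t0 -> JC (fun _ t => f t) r0 t0.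
Proof.
  intros Hf eps Heps.
  destruct (Hf eps Heps) as [d [Hd P]]. exists d; split; auto.
  intros r t _ Ht. destruct (Req_dec t t0) as [->|Hne].
  - unfold Rminus; rewrite Rplus_opp_r, Rabs_R0; auto.
  - apply (P t). split; [split; [exact I| intro; apply Hne; auto] | exact Ht].
Qed.

Lemma JC_cont_t G r0 t0 : JC G r0 t0 -> continuity_pt (G r0) t0.
Proof.
  intros H eps Heps. destruct (H eps Heps) as [d [Hd P]]. exists d; split; auto.
  intros t [_ Ht]. simpl in *. unfold Rdist in *. apply P; auto.
  unfold Rminus; rewrite Rplus_opp_r, Rabs_R0; auto.
Qed.

Lemma JC_unif G r0 a b : a <= b -> (forall t, a <= t <= b -> JC G r0 t) ->
  forall eps, 0 < eps -> exists delta, 0 < delta /\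
    forall r t, Rabs (r - r0) < delta -> a <= t <= b -> Rabs (G r t - G r0 t) < eps.
Proof.
  intros Hab HJ eps Heps.
  set (P := fun T => exists delta, 0 < delta /\
    forall r t, Rabs (r - r0) < delta -> a <= t <= T -> Rabs (G r t - G r0 t) < eps).
  set (E := fun T => a <= T <= b /\ P T).
  assert (Ea : E a).
  { split; [lra|]. destruct (HJ a ltac:(lra) eps Heps) as [d [Hd Pd]].
    exists d; split; auto. intros r t Hr Ht. replace t with a by lra. apply Pd; auto.
    unfold Rminus; rewrite Rplus_opp_r, Rabs_R0; auto. }
  destruct (completeness E) as [c [Hub Hlub]].
  { exists b; intros T [HT _]; lra. }
  { exists a; auto. }
  assert (Hc : a <= c <= b).
  { split. apply Hub; auto. apply Hlub. intros T [HT _]; lra. }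
  destruct (HJ c Hc (eps/2) ltac:(lra)) as [dc [Hdc Pc]].
  assert (HT : exists T, E T /\ c - dc < T).
  { destruct (classic (exists T, E T /\ c - dc < T)) as [H|H]; auto.
    exfalso. assert (c <= c - dc); [|lra]. apply Hlub. intros T HT.
    destruct (Rle_dec T (c - dc)) as [|n]; auto. exfalso; apply H; exists T; split; auto; lra. }
  destruct HT as [T [[HT1 [dT [HdT PT]]] HT2]].
  set (T' := Rmin b (c + dc/2)).
  assert (PT' : P T').
  { exists (Rmin dT dc); split. apply Rmin_pos; auto.
    intros r t Hr Ht. pose proof (Rmin_l dT dc); pose proof (Rmin_r dT dc).
    destruct (Rle_dec t T) as [Hle|Hgt].
    - apply PT; auto; lra.
    - pose proof (Rmin_r b (c + dc/2)). fold T' in H1.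
      assert (Rabs (t - c) < dc) by (apply Rabs_def1; lra).
      pose proof (Pc r t ltac:(lra) H2).
      pose proof (Pc r0 t ltac:(unfold Rminus; rewrite Rplus_opp_r, Rabs_R0; lra) H2).
      replace (G r t - G r0 t) with ((G r t - G r0 c) - (G r0 t - G r0 c)) by ring.
      eapply Rle_lt_trans. apply Rabs_triang. rewrite Rabs_Ropp. lra. }
  assert (ET' : E T').
  { split; auto. unfold T'. split. apply Rmin_glb; lra. apply Rmin_l. }
  pose proof (Hub T' ET').
  assert (T' = b).
  { unfold T' in *. destruct (Rle_dec b (c + dc/2)).
    rewrite Rmin_left; auto. rewrite Rmin_right in H; lra. }
  rewrite H0 in PT'. exact PT'.
Qed.


Lemma JC_contab G r T : (forall t, 0 <= t <= T -> JC G r t) -> contab (G r) 0 T.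
Proof. intros H t Ht. apply JC_cont_t; auto. Qed.

Lemma diff_int G Gr r0 lo hi T : lo < r0 < hi -> 0 <= T ->
  (forall r t, lo < r < hi -> derivable_pt_lim (fun s => G s t) r (Gr r t)) ->
  (forall r t, lo < r < hi -> JC G r t) -> (forall r t, lo < r < hi -> JC Gr r t) ->
  derivable_pt_lim (fun r => Rint (G r) 0 T) r0 (Rint (Gr r0) 0 T).
Proof.
  intros Hr0 HT Hd HG HGr eps Heps.
  set (e1 := eps / (2 * (T + 1))).
  assert (He1 : 0 < e1) by (unfold e1; apply Rdiv_lt_0_compat; lra).
  destruct (JC_unif Gr r0 0 T HT (fun t _ => HGr r0 t Hr0) e1 He1) as [d1 [Hd1 P1]].
  assert (Hdp : 0 < Rmin d1 (Rmin (r0 - lo) (hi - r0))).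
  { repeat apply Rmin_pos; lra. }
  exists (mkposreal _ Hdp). intros h Hh0 Hh. simpl in Hh.
  pose proof (Rmin_l d1 (Rmin (r0 - lo) (hi - r0))).
  pose proof (Rmin_r d1 (Rmin (r0 - lo) (hi - r0))).
  pose proof (Rmin_l (r0 - lo) (hi - r0)). pose proof (Rmin_r (r0 - lo) (hi - r0)).
  pose proof (Rle_abs h). pose proof (Rle_abs (-h)). rewrite Rabs_Ropp in *.
  assert (Hrh : lo < r0 + h < hi) by lra.
  assert (C0 : contab (G r0) 0 T) by (apply JC_contab; intros; apply HG; lra).
  assert (C1 : contab (G (r0 + h)) 0 T) by (apply JC_contab; intros; apply HG; lra).
  assert (C2 : contab (Gr r0) 0 T) by (apply JC_contab; intros; apply HGr; lra).
  set (D := fun t => (G (r0 + h) t + (-1) * G r0 t) + (- h) * Gr r0 t).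
  assert (CD1 : contab (fun t => G (r0 + h) t + (-1) * G r0 t) 0 T).
  { apply contab_plus; auto. apply contab_mult; auto. apply contab_const. }
  assert (ED : Rint D 0 T = Rint (G (r0 + h)) 0 T - Rint (G r0) 0 T - h * Rint (Gr r0) 0 T).
  { unfold D. rewrite Rint_lin; auto. rewrite Rint_lin; auto. ring. }
  assert (BD : Rabs (Rint D 0 T) <= (Rabs h * e1) * (T - 0)).
  { apply Rint_bound; auto.
    - unfold D; apply contab_plus; auto. apply contab_mult; auto. apply contab_const.
    - intros t Ht. unfold D.
      destruct (MVT_gen (fun s => G s t) (fun s => Gr s t) r0 (r0 + h)) as [xi [Hxi Exi]].
      { intros c Hc. apply Hd. unfold Rmin, Rmax in Hc. destruct (Rle_dec r0 (r0 + h)); lra. }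
      replace (G (r0 + h) t + -1 * G r0 t + - h * Gr r0 t) with (h * (Gr xi t - Gr r0 t)).
      2:{ replace (G (r0 + h) t + -1 * G r0 t) with (G (r0 + h) t - G r0 t) by ring.
          rewrite Exi. ring. }
      rewrite Rabs_mult. apply Rmult_le_compat_l. apply Rabs_pos.
      left. apply P1; auto. unfold Rmin, Rmax in Hxi. destruct (Rle_dec r0 (r0 + h));
      apply Rabs_def1; lra. }
  rewrite ED in BD.
  replace ((Rint (G (r0 + h)) 0 T - Rint (G r0) 0 T) / h - Rint (Gr r0) 0 T)
    with ((Rint (G (r0 + h)) 0 T - Rint (G r0) 0 T - h * Rint (Gr r0) 0 T) / h) by (field; auto).
  unfold Rdiv. rewrite Rabs_mult, Rabs_inv.
  apply Rmult_lt_reg_r with (Rabs h). apply Rabs_pos_lt; auto.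
  rewrite Rmult_assoc, Rinv_l, Rmult_1_r. 2: apply Rabs_no_R0; auto.
  eapply Rle_lt_trans. apply BD.
  unfold e1. replace (Rabs h * (eps / (2 * (T + 1))) * (T - 0)) with (Rabs h * eps * (T / (2 * (T+1)))) by (field; lra).
  rewrite (Rmult_comm eps (Rabs h)).
  rewrite <- (Rmult_1_r (Rabs h * eps)) at 2.
  apply Rmult_lt_compat_l. apply Rmult_lt_0_compat; auto. apply Rabs_pos_lt; auto.
  apply Rmult_lt_reg_r with (2 * (T + 1)). lra.
  unfold Rdiv. rewrite Rmult_assoc, Rinv_l; lra.
Qed.

Lemma cont_int G r0 lo hi T : lo < r0 < hi -> 0 <= T ->
  (forall r t, lo < r < hi -> JC G r t) ->
  continuity_pt (fun r => Rint (G r) 0 T) r0.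
Proof.
  intros Hr0 HT HG eps Heps.
  set (e1 := eps / (T + 1)).
  assert (He1 : 0 < e1) by (unfold e1; apply Rdiv_lt_0_compat; lra).
  destruct (JC_unif G r0 0 T HT (fun t _ => HG r0 t Hr0) e1 He1) as [d1 [Hd1 P1]].
  exists (Rmin d1 (Rmin (r0 - lo) (hi - r0))); split.
  { repeat apply Rmin_pos; lra. }
  intros r [_ Hr]. simpl in Hr. unfold Rdist in *. simpl. unfold Rdist.
  pose proof (Rmin_l d1 (Rmin (r0 - lo) (hi - r0))).
  pose proof (Rmin_r d1 (Rmin (r0 - lo) (hi - r0))).
  pose proof (Rmin_l (r0 - lo) (hi - r0)). pose proof (Rmin_r (r0 - lo) (hi - r0)).
  pose proof (Rle_abs (r - r0)). pose proof (Rle_abs (-(r - r0))). rewrite Rabs_Ropp in *.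
  assert (C0 : contab (G r0) 0 T) by (apply JC_contab; intros; apply HG; lra).
  assert (C1 : contab (G r) 0 T) by (apply JC_contab; intros; apply HG; lra).
  replace (Rint (G r) 0 T - Rint (G r0) 0 T) with (Rint (fun t => G r t + (-1) * G r0 t) 0 T)
    by (rewrite Rint_lin; auto; ring).
  eapply Rle_lt_trans. apply (Rint_bound _ 0 T e1); auto.
  { apply contab_plus; auto. apply contab_mult; auto. apply contab_const. }
  { intros t Ht. left. replace (G r t + -1 * G r0 t) with (G r t - G r0 t) by ring. apply P1; auto. lra. }
  unfold e1. replace (eps / (T + 1) * (T - 0)) with (eps * (T / (T + 1))) by (field; lra).
  rewrite <- (Rmult_1_r eps) at 2. apply Rmult_lt_compat_l; auto.
  apply Rmult_lt_reg_r with (T + 1). lra.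
  unfold Rdiv. rewrite Rmult_assoc, Rinv_l; lra.
Qed.


Lemma norm_tri x y x' y' :
  sqrt (x' ^ 2 + y' ^ 2) <= sqrt (x ^ 2 + y ^ 2) + Rabs (x' - x) + Rabs (y' - y).
Proof.
  set (N := sqrt (x ^ 2 + y ^ 2)).
  assert (HN : 0 <= N) by apply sqrt_pos.
  assert (HN2 : N * N = x ^ 2 + y ^ 2) by (apply sqrt_sqrt; nra).
  set (A := Rabs (x' - x)). set (B := Rabs (y' - y)).
  assert (HA : 0 <= A) by apply Rabs_pos. assert (HB : 0 <= B) by apply Rabs_pos.
  assert (HA2 : A * A = (x' - x) ^ 2) by (unfold A; rewrite <- Rabs_mult, Rabs_right; [ring|apply Rle_ge, Rle_0_sqr]).
  assert (HB2 : B * B = (y' - y) ^ 2) by (unfold B; rewrite <- Rabs_mult, Rabs_right; [ring|apply Rle_ge, Rle_0_sqr]).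
  assert (Hx : Rabs x <= N).
  { apply Rsqr_incr_0_var. unfold Rsqr. rewrite <- Rabs_mult, Rabs_right by nra. nra. auto. }
  assert (Hy : Rabs y <= N).
  { apply Rsqr_incr_0_var. unfold Rsqr. rewrite <- Rabs_mult, Rabs_right by nra. nra. auto. }
  assert (P1 : x * (x' - x) <= N * A).
  { eapply Rle_trans. apply Rle_abs. rewrite Rabs_mult. apply Rmult_le_compat; [apply Rabs_pos|apply Rabs_pos|lra|unfold A, B; lra]. }
  assert (P2 : y * (y' - y) <= N * B).
  { eapply Rle_trans. apply Rle_abs. rewrite Rabs_mult. apply Rmult_le_compat; [apply Rabs_pos|apply Rabs_pos|lra|unfold A, B; lra]. }
  rewrite <- (sqrt_square (N + A + B)) by lra.
  apply sqrt_le_1_alt. nra.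
Qed.

Lemma box_ann a b x y : ann a b x y -> exists d, 0 < d /\
  forall x' y', Rabs (x' - x) < d -> Rabs (y' - y) < d -> ann a b x' y'.
Proof.
  unfold ann. intros [H1 H2].
  exists (Rmin (sqrt (x ^ 2 + y ^ 2) - a) (b - sqrt (x ^ 2 + y ^ 2)) / 2); split.
  { pose proof (Rmin_pos (sqrt (x ^ 2 + y ^ 2) - a) (b - sqrt (x ^ 2 + y ^ 2)) ltac:(lra) ltac:(lra)). lra. }
  intros x' y' Hx Hy.
  pose proof (Rmin_l (sqrt (x ^ 2 + y ^ 2) - a) (b - sqrt (x ^ 2 + y ^ 2))).
  pose proof (Rmin_r (sqrt (x ^ 2 + y ^ 2) - a) (b - sqrt (x ^ 2 + y ^ 2))).
  pose proof (norm_tri x y x' y'). pose proof (norm_tri x' y' x y).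
  rewrite (Rabs_minus_sym x x'), (Rabs_minus_sym y y') in H4. lra.
Qed.


Lemma Rabs_sub_le_minmax a b c : Rmin a b <= c <= Rmax a b -> Rabs (c - a) <= Rabs (b - a).
Proof.
  unfold Rmin, Rmax. destruct (Rle_dec a b); intros H;
  unfold Rabs; repeat destruct Rcase_abs; lra.
Qed.

Lemma sq_lt a c : 0 <= a -> a < c -> a ^ 2 < c ^ 2.
Proof. intros; nra. Qed.

Lemma half_sq r : 0 < r -> 2 * (r / 2) ^ 2 < r ^ 2.
Proof. intros; nra. Qed.

Lemma chain (D : R -> R -> Prop) f fx fy X Y X' Y' s0 :
  (exists d, 0 < d /\ forall x' y', Rabs (x' - X s0) < d -> Rabs (y' - Y s0) < d -> D x' y') ->
  pd_x D f fx -> pd_y D f fy -> cont2 D fx -> cont2 D fy ->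
  derivable_pt_lim X s0 X' -> derivable_pt_lim Y s0 Y' ->
  derivable_pt_lim (fun s => f (X s) (Y s)) s0
    (fx (X s0) (Y s0) * X' + fy (X s0) (Y s0) * Y').
Proof.
  intros [d0 [Hd0 Hbox]] Hpx Hpy Hcx Hcy HX HY eps Heps.
  set (x0 := X s0) in *. set (y0 := Y s0) in *.
  set (A0 := fx x0 y0). set (B0 := fy x0 y0).
  assert (HD0 : D x0 y0) by (apply Hbox; unfold Rminus; rewrite Rplus_opp_r, Rabs_R0; lra).
  pose proof (Rabs_pos X'). pose proof (Rabs_pos Y'). pose proof (Rabs_pos A0). pose proof (Rabs_pos B0).
  destruct (Hcx x0 y0 HD0 (eps / (5 * (Rabs X' + 1)))) as [r1 [Hr1 P1]].
  { apply Rdiv_lt_0_compat; lra. }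
  destruct (Hcy x0 y0 HD0 (eps / (5 * (Rabs Y' + 1)))) as [r2 [Hr2 P2]].
  { apply Rdiv_lt_0_compat; lra. }
  set (m := Rmin d0 (Rmin r1 r2 / 2)).
  assert (Hm : 0 < m) by (unfold m; apply Rmin_pos; auto; pose proof (Rmin_pos r1 r2 Hr1 Hr2); lra).
  assert (Hm1 : m <= d0) by apply Rmin_l.
  assert (Hm2 : m <= Rmin r1 r2 / 2) by apply Rmin_r.
  pose proof (Rmin_l r1 r2). pose proof (Rmin_r r1 r2).
  set (ex := Rmin 1 (eps / (5 * (Rabs A0 + 1)))).
  assert (Hex : 0 < ex) by (apply Rmin_pos; [lra| apply Rdiv_lt_0_compat; lra]).
  set (ey := Rmin 1 (eps / (5 * (Rabs B0 + 1)))).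
  assert (Hey : 0 < ey) by (apply Rmin_pos; [lra| apply Rdiv_lt_0_compat; lra]).
  destruct (HX ex Hex) as [dx Pdx]. destruct (HY ey Hey) as [dy Pdy].
  set (dd := Rmin (Rmin dx dy) (Rmin (m / (Rabs X' + 2)) (m / (Rabs Y' + 2)))).
  assert (Hdd : 0 < dd).
  { unfold dd. repeat apply Rmin_pos; try apply cond_pos; apply Rdiv_lt_0_compat; lra. }
  exists (mkposreal dd Hdd). intros h Hh0 Hh. simpl in Hh.
  assert (Hdd1 : dd <= dx) by (unfold dd; eapply Rle_trans; [apply Rmin_l|apply Rmin_l]).
  assert (Hdd2 : dd <= dy) by (unfold dd; eapply Rle_trans; [apply Rmin_l|apply Rmin_r]).
  assert (Hdd3 : dd <= m / (Rabs X' + 2)) by (unfold dd; eapply Rle_trans; [apply Rmin_r|apply Rmin_l]).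
  assert (Hdd4 : dd <= m / (Rabs Y' + 2)) by (unfold dd; eapply Rle_trans; [apply Rmin_r|apply Rmin_r]).
  set (x1 := X (s0 + h)). set (y1 := Y (s0 + h)).
  set (q1 := (x1 - x0) / h). set (q2 := (y1 - y0) / h).
  assert (Q1 : Rabs (q1 - X') < ex) by (apply Pdx; auto; lra).
  assert (Q2 : Rabs (q2 - Y') < ey) by (apply Pdy; auto; lra).
  assert (Hex1 : ex <= 1) by apply Rmin_l. assert (Hey1 : ey <= 1) by apply Rmin_l.
  assert (Hex2 : ex <= eps / (5 * (Rabs A0 + 1))) by apply Rmin_r.
  assert (Hey2 : ey <= eps / (5 * (Rabs B0 + 1))) by apply Rmin_r.
  assert (Aq1 : Rabs q1 <= Rabs X' + 1).
  { replace q1 with (X' + (q1 - X')) by ring. eapply Rle_trans. apply Rabs_triang. lra. }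
  assert (Aq2 : Rabs q2 <= Rabs Y' + 1).
  { replace q2 with (Y' + (q2 - Y')) by ring. eapply Rle_trans. apply Rabs_triang. lra. }
  assert (E1 : x1 - x0 = q1 * h) by (unfold q1; field; auto).
  assert (E2 : y1 - y0 = q2 * h) by (unfold q2; field; auto).
  assert (Hha : 0 < Rabs h) by (apply Rabs_pos_lt; auto).
  assert (Dx : Rabs (x1 - x0) < m).
  { rewrite E1, Rabs_mult. apply Rle_lt_trans with ((Rabs X' + 1) * Rabs h).
    apply Rmult_le_compat_r; lra.
    apply Rlt_le_trans with ((Rabs X' + 2) * (m / (Rabs X' + 2))).
    apply Rle_lt_trans with ((Rabs X' + 2) * Rabs h). apply Rmult_le_compat_r; lra.
    apply Rmult_lt_compat_l; lra. right; field; lra. }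
  assert (Dy : Rabs (y1 - y0) < m).
  { rewrite E2, Rabs_mult. apply Rle_lt_trans with ((Rabs Y' + 1) * Rabs h).
    apply Rmult_le_compat_r; lra.
    apply Rlt_le_trans with ((Rabs Y' + 2) * (m / (Rabs Y' + 2))).
    apply Rle_lt_trans with ((Rabs Y' + 2) * Rabs h). apply Rmult_le_compat_r; lra.
    apply Rmult_lt_compat_l; lra. right; field; lra. }
  destruct (MVT_gen (fun t => f t y1) (fun t => fx t y1) x0 x1) as [xi [Hxi Exi]].
  { intros c Hc. apply Hpx. apply Hbox.
    pose proof (Rabs_sub_le_minmax _ _ _ Hc). lra. lra. }
  destruct (MVT_gen (fun t => f x0 t) (fun t => fy x0 t) y0 y1) as [eta [Heta Eeta]].
  { intros c Hc. apply Hpy. apply Hbox. unfold Rminus; rewrite Rplus_opp_r, Rabs_R0; lra.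
    pose proof (Rabs_sub_le_minmax _ _ _ Hc). lra. }
  pose proof (Rabs_sub_le_minmax _ _ _ Hxi). pose proof (Rabs_sub_le_minmax _ _ _ Heta).
  assert (F1 : Rabs (fx xi y1 - A0) < eps / (5 * (Rabs X' + 1))).
  { apply P1. apply Hbox; lra.
    assert (Rabs (xi - x0) ^ 2 < (r1/2) ^ 2) by (apply sq_lt; [apply Rabs_pos|lra]).
    assert (Rabs (y1 - y0) ^ 2 < (r1/2) ^ 2) by (apply sq_lt; [apply Rabs_pos|lra]).
    rewrite <- (pow2_abs (xi - x0)), <- (pow2_abs (y1 - y0)). pose proof (half_sq r1 Hr1). lra. }
  assert (F2 : Rabs (fy x0 eta - B0) < eps / (5 * (Rabs Y' + 1))).
  { apply P2. apply Hbox; [unfold Rminus; rewrite Rplus_opp_r, Rabs_R0|]; lra.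
    assert (Rabs (eta - y0) ^ 2 < (r2/2) ^ 2) by (apply sq_lt; [apply Rabs_pos|lra]).
    replace ((x0 - x0) ^ 2) with 0 by ring.
    rewrite <- (pow2_abs (eta - y0)). pose proof (half_sq r2 Hr2). lra. }
  replace (s0 + h) with (s0 + h) by ring. fold x1 y1. fold x0 y0.
  replace (f x1 y1 - f x0 y0) with ((f x1 y1 - f x0 y1) + (f x0 y1 - f x0 y0)) by ring.
  rewrite Exi, Eeta, E1, E2.
  replace ((fx xi y1 * (q1 * h) + fy x0 eta * (q2 * h)) / h - (A0 * X' + B0 * Y'))
    with ((fx xi y1 - A0) * q1 + A0 * (q1 - X') + ((fy x0 eta - B0) * q2 + B0 * (q2 - Y')))
    by (field; auto).
  assert (T1 : Rabs ((fx xi y1 - A0) * q1) <= eps / 5).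
  { rewrite Rabs_mult. apply Rle_trans with (eps / (5 * (Rabs X' + 1)) * (Rabs X' + 1)).
    apply Rmult_le_compat; try apply Rabs_pos; lra. right; field; lra. }
  assert (T2 : Rabs (A0 * (q1 - X')) <= eps / 5).
  { rewrite Rabs_mult. apply Rle_trans with ((Rabs A0 + 1) * (eps / (5 * (Rabs A0 + 1)))).
    apply Rmult_le_compat; try apply Rabs_pos; lra. right; field; lra. }
  assert (T3 : Rabs ((fy x0 eta - B0) * q2) <= eps / 5).
  { rewrite Rabs_mult. apply Rle_trans with (eps / (5 * (Rabs Y' + 1)) * (Rabs Y' + 1)).
    apply Rmult_le_compat; try apply Rabs_pos; lra. right; field; lra. }
  assert (T4 : Rabs (B0 * (q2 - Y')) <= eps / 5).
  { rewrite Rabs_mult. apply Rle_trans with ((Rabs B0 + 1) * (eps / (5 * (Rabs B0 + 1)))).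
    apply Rmult_le_compat; try apply Rabs_pos; lra. right; field; lra. }
  eapply Rle_lt_trans. apply Rabs_triang.
  pose proof (Rabs_triang ((fx xi y1 - A0) * q1) (A0 * (q1 - X'))).
  pose proof (Rabs_triang ((fy x0 eta - B0) * q2) (B0 * (q2 - Y'))).
  lra.
Qed.


Definition pol (f : R -> R -> R) r t := f (r * cos t) (r * sin t).

Lemma dpl_eq f x l l' : derivable_pt_lim f x l -> l = l' -> derivable_pt_lim f x l'.
Proof. intros H ->; auto. Qed.
Lemma dpl_plus f g x l1 l2 : derivable_pt_lim f x l1 -> derivable_pt_lim g x l2 ->
  derivable_pt_lim (fun s => f s + g s) x (l1 + l2).
Proof. intros; exact (derivable_pt_lim_plus f g x l1 l2 H H0). Qed.
Lemma dpl_mult f g x l1 l2 : derivable_pt_lim f x l1 -> derivable_pt_lim g x l2 ->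
  derivable_pt_lim (fun s => f s * g s) x (l1 * g x + f x * l2).
Proof. intros; exact (derivable_pt_lim_mult f g x l1 l2 H H0). Qed.
Lemma dpl_const c x : derivable_pt_lim (fun _ => c) x 0.
Proof. exact (derivable_pt_lim_const c x). Qed.
Lemma dpl_id x : derivable_pt_lim (fun s => s) x 1.
Proof. exact (derivable_pt_lim_id x). Qed.
Lemma dpl_pow2 f x l : derivable_pt_lim f x l -> derivable_pt_lim (fun s => f s ^ 2) x (2 * f x * l).
Proof.
  intros H. eapply dpl_eq. apply (dpl_mult f (fun s => f s * 1)); [exact H|].
  eapply dpl_eq. apply dpl_mult; [exact H| apply dpl_const]. reflexivity.
  simpl; ring.
Qed.
Lemma dpl_cos x : derivable_pt_lim cos x (- sin x).
Proof. apply derivable_pt_lim_cos. Qed.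
Lemma dpl_sin x : derivable_pt_lim sin x (cos x).
Proof. apply derivable_pt_lim_sin. Qed.

Lemma pol_norm r t : 0 <= r -> sqrt ((r * cos t) ^ 2 + (r * sin t) ^ 2) = r.
Proof.
  intros Hr. replace ((r * cos t) ^ 2 + (r * sin t) ^ 2) with (r ^ 2).
  - apply sqrt_pow2; auto.
  - pose proof (sin2_cos2 t). unfold Rsqr in H. replace ((r * cos t) ^ 2 + (r * sin t) ^ 2) with (r^2 * (sin t * sin t + cos t * cos t)) by ring.
    rewrite H; ring.
Qed.

Lemma pol_ann Rr r t : 1 < r < Rr -> ann 1 Rr (r * cos t) (r * sin t).
Proof. intros H. unfold ann. rewrite pol_norm; lra. Qed.

Lemma JC_pol Rr g r0 t0 : cont2 (ann 1 Rr) g -> 1 < r0 < Rr -> JC (pol g) r0 t0.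
Proof.
  intros Hg Hr0 eps Heps.
  destruct (Hg _ _ (pol_ann Rr r0 t0 Hr0) eps Heps) as [d1 [Hd1 P1]].
  set (dl := Rmin (Rmin (r0 - 1) (Rr - r0)) (d1 / (2 * (r0 + 2)))).
  assert (Hdl : 0 < dl) by (unfold dl; repeat apply Rmin_pos; try lra; apply Rdiv_lt_0_compat; lra).
  exists dl; split; auto.
  intros r t Hr Ht. unfold pol.
  pose proof (Rmin_l (Rmin (r0 - 1) (Rr - r0)) (d1 / (2 * (r0 + 2)))).
  pose proof (Rmin_r (Rmin (r0 - 1) (Rr - r0)) (d1 / (2 * (r0 + 2)))).
  pose proof (Rmin_l (r0 - 1) (Rr - r0)). pose proof (Rmin_r (r0 - 1) (Rr - r0)).
  fold dl in H, H0.
  assert (Hrr : 1 < r < Rr).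
  { pose proof (Rle_abs (r - r0)). pose proof (Rle_abs (-(r - r0))). rewrite Rabs_Ropp in H4. lra. }
  apply P1. apply pol_ann; auto.
  assert (K : dl * (r0 + 2) <= d1 / 2).
  { apply Rle_trans with (d1 / (2 * (r0 + 2)) * (r0 + 2)). apply Rmult_le_compat_r; lra.
    right; field; lra. }
  assert (B1 : Rabs (r * cos t - r0 * cos t0) < d1 / 2).
  { replace (r * cos t - r0 * cos t0) with ((r - r0) * cos t + r0 * (cos t - cos t0)) by ring.
    eapply Rle_lt_trans. apply Rabs_triang. rewrite !Rabs_mult.
    pose proof (cos_lip t t0). pose proof (COS_bound t).
    assert (Rabs (cos t) <= 1) by (apply Rabs_le; lra).
    rewrite (Rabs_pos_eq r0) by lra.
    assert (Rabs (r - r0) * Rabs (cos t) <= Rabs (r - r0)).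
    { rewrite <- (Rmult_1_r (Rabs (r - r0))) at 2. apply Rmult_le_compat_l; auto. apply Rabs_pos. }
    assert (r0 * Rabs (cos t - cos t0) <= r0 * Rabs (t - t0)) by (apply Rmult_le_compat_l; lra).
    assert (r0 * Rabs (t - t0) <= r0 * dl) by (apply Rmult_le_compat_l; lra).
    lra. }
  assert (B2 : Rabs (r * sin t - r0 * sin t0) < d1 / 2).
  { replace (r * sin t - r0 * sin t0) with ((r - r0) * sin t + r0 * (sin t - sin t0)) by ring.
    eapply Rle_lt_trans. apply Rabs_triang. rewrite !Rabs_mult.
    pose proof (sin_lip t t0). pose proof (SIN_bound t).
    assert (Rabs (sin t) <= 1) by (apply Rabs_le; lra).
    rewrite (Rabs_pos_eq r0) by lra.
    assert (Rabs (r - r0) * Rabs (sin t) <= Rabs (r - r0)).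
    { rewrite <- (Rmult_1_r (Rabs (r - r0))) at 2. apply Rmult_le_compat_l; auto. apply Rabs_pos. }
    assert (r0 * Rabs (sin t - sin t0) <= r0 * Rabs (t - t0)) by (apply Rmult_le_compat_l; lra).
    assert (r0 * Rabs (t - t0) <= r0 * dl) by (apply Rmult_le_compat_l; lra).
    lra. }
  rewrite <- (pow2_abs (r * cos t - r0 * cos t0)), <- (pow2_abs (r * sin t - r0 * sin t0)).
  pose proof (sq_lt _ _ (Rabs_pos _) B1). pose proof (sq_lt _ _ (Rabs_pos _) B2).
  pose proof (half_sq d1 Hd1). lra.
Qed.


Definition C2comp Rr (w wx wy wxx wxy wyx wyy : R -> R -> R) :=
  pd_x (ann 1 Rr) w wx /\ pd_y (ann 1 Rr) w wy /\ cont2 (ann 1 Rr) w /\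
  cont2 (ann 1 Rr) wx /\ cont2 (ann 1 Rr) wy /\
  pd_x (ann 1 Rr) wx wxx /\ pd_y (ann 1 Rr) wx wxy /\ pd_x (ann 1 Rr) wy wyx /\
  pd_y (ann 1 Rr) wy wyy /\
  cont2 (ann 1 Rr) wxx /\ cont2 (ann 1 Rr) wxy /\ cont2 (ann 1 Rr) wyx /\ cont2 (ann 1 Rr) wyy /\
  (forall x y, ann 1 Rr x y -> wxx x y + wyy x y = 0).

Lemma C2comp_of Rr w wx wy : C2_harmonic (ann 1 Rr) w wx wy ->
  exists wxx wxy wyx wyy, C2comp Rr w wx wy wxx wxy wyx wyy.
Proof.
  intros (H1 & H2 & H3 & H4 & H5 & wxx & wxy & wyx & wyy & H6 & H7 & H8 & H9 & H10 & H11 & H12 & H13 & H14).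
  exists wxx, wxy, wyx, wyy. repeat split; auto.
Qed.

Lemma chain_r Rr f fx fy r t : pd_x (ann 1 Rr) f fx -> pd_y (ann 1 Rr) f fy ->
  cont2 (ann 1 Rr) fx -> cont2 (ann 1 Rr) fy -> 1 < r < Rr ->
  derivable_pt_lim (fun s => pol f s t) r (pol fx r t * cos t + pol fy r t * sin t).
Proof.
  intros. unfold pol.
  apply (chain (ann 1 Rr) f fx fy (fun s => s * cos t) (fun s => s * sin t) (cos t) (sin t) r); auto.
  - apply box_ann. apply pol_ann; auto.
  - eapply dpl_eq. apply dpl_mult; [apply dpl_id|apply dpl_const]. cbv beta; ring.
  - eapply dpl_eq. apply dpl_mult; [apply dpl_id|apply dpl_const]. cbv beta; ring.
Qed.

Lemma chain_t Rr f fx fy r t : pd_x (ann 1 Rr) f fx -> pd_y (ann 1 Rr) f fy ->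
  cont2 (ann 1 Rr) fx -> cont2 (ann 1 Rr) fy -> 1 < r < Rr ->
  derivable_pt_lim (fun s => pol f r s) t (pol fx r t * (- (r * sin t)) + pol fy r t * (r * cos t)).
Proof.
  intros. unfold pol.
  apply (chain (ann 1 Rr) f fx fy (fun s => r * cos s) (fun s => r * sin s) (- (r * sin t)) (r * cos t) t); auto.
  - apply box_ann. apply pol_ann; auto.
  - eapply dpl_eq. apply dpl_mult; [apply dpl_const|apply dpl_cos]. cbv beta; ring.
  - eapply dpl_eq. apply dpl_mult; [apply dpl_const|apply dpl_sin]. cbv beta; ring.
Qed.

Definition Sr w wx wy r t := 2 * pol w r t * (pol wx r t * cos t + pol wy r t * sin t).
Definition Srr w wx wy wxx wxy wyx wyy r t :=
  2 * (pol wx r t * cos t + pol wy r t * sin t) ^ 2 +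
  2 * pol w r t * ((pol wxx r t * cos t + pol wxy r t * sin t) * cos t +
                   (pol wyx r t * cos t + pol wyy r t * sin t) * sin t).
Definition St w wx wy r t := 2 * pol w r t * (pol wx r t * (- (r * sin t)) + pol wy r t * (r * cos t)).
Definition Stt w wx wy wxx wxy wyx wyy r t :=
  2 * (pol wx r t * (- (r * sin t)) + pol wy r t * (r * cos t)) ^ 2 +
  2 * pol w r t * ((pol wxx r t * (- (r * sin t)) + pol wxy r t * (r * cos t)) * (- (r * sin t))
                   + pol wx r t * (- (r * cos t))
                   + (pol wyx r t * (- (r * sin t)) + pol wyy r t * (r * cos t)) * (r * cos t)
                   + pol wy r t * (- (r * sin t))).


Lemma d_r_sq Rr w wx wy wxx wxy wyx wyy r t : C2comp Rr w wx wy wxx wxy wyx wyy -> 1 < r < Rr ->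
  derivable_pt_lim (fun s => pol w s t ^ 2) r (Sr w wx wy r t).
Proof.
  intros (H1 & H2 & H3 & H4 & H5 & H6 & H7 & H8 & H9 & H10 & H11 & H12 & H13 & H14) Hr.
  eapply dpl_eq. apply dpl_pow2. apply (chain_r Rr w wx wy); auto. unfold Sr; cbv beta; ring.
Qed.

Lemma d_t_sq Rr w wx wy wxx wxy wyx wyy r t : C2comp Rr w wx wy wxx wxy wyx wyy -> 1 < r < Rr ->
  derivable_pt_lim (fun s => pol w r s ^ 2) t (St w wx wy r t).
Proof.
  intros (H1 & H2 & H3 & H4 & H5 & H6 & H7 & H8 & H9 & H10 & H11 & H12 & H13 & H14) Hr.
  eapply dpl_eq. apply dpl_pow2. apply (chain_t Rr w wx wy); auto. unfold St; cbv beta; ring.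
Qed.

Lemma d_r_Sr Rr w wx wy wxx wxy wyx wyy r t : C2comp Rr w wx wy wxx wxy wyx wyy -> 1 < r < Rr ->
  derivable_pt_lim (fun s => Sr w wx wy s t) r (Srr w wx wy wxx wxy wyx wyy r t).
Proof.
  intros (H1 & H2 & H3 & H4 & H5 & H6 & H7 & H8 & H9 & H10 & H11 & H12 & H13 & H14) Hr.
  unfold Sr. eapply dpl_eq.
  apply dpl_mult. apply dpl_mult. apply dpl_const. apply (chain_r Rr w wx wy); auto.
  apply dpl_plus; (apply dpl_mult; [ | apply dpl_const]).
  apply (chain_r Rr wx wxx wxy); auto. apply (chain_r Rr wy wyx wyy); auto.
  unfold Srr. cbv beta; ring.
Qed.

Lemma d_t_St Rr w wx wy wxx wxy wyx wyy r t : C2comp Rr w wx wy wxx wxy wyx wyy -> 1 < r < Rr ->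
  derivable_pt_lim (fun s => St w wx wy r s) t (Stt w wx wy wxx wxy wyx wyy r t).
Proof.
  intros (H1 & H2 & H3 & H4 & H5 & H6 & H7 & H8 & H9 & H10 & H11 & H12 & H13 & H14) Hr.
  unfold St. eapply dpl_eq.
  apply dpl_mult. apply dpl_mult. apply dpl_const. apply (chain_t Rr w wx wy); auto.
  apply dpl_plus.
  - apply dpl_mult. apply (chain_t Rr wx wxx wxy); auto.
    eapply dpl_eq. apply (derivable_pt_lim_opp (fun s => r * sin s)).
    apply dpl_mult. apply dpl_const. apply dpl_sin. reflexivity.
  - apply dpl_mult. apply (chain_t Rr wy wyx wyy); auto.
    apply dpl_mult. apply dpl_const. apply dpl_cos.
  - unfold Stt. cbv beta; ring.
Qed.

Lemma comp_ident Rr w wx wy wxx wxy wyx wyy r t : C2comp Rr w wx wy wxx wxy wyx wyy -> 1 < r < Rr ->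
  r * (Sr w wx wy r t + r * Srr w wx wy wxx wxy wyx wyy r t) + Stt w wx wy wxx wxy wyx wyy r t
  = 2 * r ^ 2 * (pol wx r t ^ 2 + pol wy r t ^ 2).
Proof.
  intros (H1 & H2 & H3 & H4 & H5 & H6 & H7 & H8 & H9 & H10 & H11 & H12 & H13 & H14) Hr.
  assert (E : pol wxx r t + pol wyy r t = 0) by (apply H14; apply pol_ann; auto).
  assert (CS : cos t ^ 2 + sin t ^ 2 = 1) by (pose proof (sin2_cos2 t); unfold Rsqr in *; nra).
  unfold Sr, Srr, Stt.
  transitivity (2 * r ^ 2 * (pol wx r t ^ 2 + pol wy r t ^ 2) * (cos t ^ 2 + sin t ^ 2)
                + 2 * pol w r t * r ^ 2 * (pol wxx r t + pol wyy r t) * (cos t ^ 2 + sin t ^ 2)).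
  - cbv beta; ring.
  - rewrite CS, E. cbv beta; ring.
Qed.


Lemma JC_opp G r0 t0 : JC G r0 t0 -> JC (fun r t => - G r t) r0 t0.
Proof.
  intros H eps He. destruct (H eps He) as [d [Hd P]]. exists d; split; auto.
  intros r t Hr Ht. replace (- G r t - - G r0 t0) with (- (G r t - G r0 t0)) by ring.
  rewrite Rabs_Ropp; auto.
Qed.
Lemma JC_pow2 G r0 t0 : JC G r0 t0 -> JC (fun r t => G r t ^ 2) r0 t0.
Proof.
  intros H. assert (E : (fun r t => G r t ^ 2) = (fun r t => G r t * (G r t * 1))).
  { apply functional_extensionality; intro; apply functional_extensionality; intro; ring. }
  rewrite E. apply JC_mult; auto. apply JC_mult; auto. apply JC_const.
Qed.
Lemma JC_cos r0 t0 : JC (fun _ t => cos t) r0 t0.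
Proof. apply (JC_t cos). apply continuity_cos. Qed.
Lemma JC_sin r0 t0 : JC (fun _ t => sin t) r0 t0.
Proof. apply (JC_t sin). apply continuity_sin. Qed.

Ltac jc Rr := repeat first [ apply JC_plus | apply JC_mult | apply JC_opp | apply JC_pow2
   | apply JC_const | apply JC_r | apply JC_cos | apply JC_sin
   | (apply (JC_pol Rr); [assumption|assumption]) ].

Lemma JC_comp Rr w wx wy wxx wxy wyx wyy r t : C2comp Rr w wx wy wxx wxy wyx wyy -> 1 < r < Rr ->
  JC (fun r t => pol w r t ^ 2) r t /\ JC (Sr w wx wy) r t /\
  JC (Srr w wx wy wxx wxy wyx wyy) r t /\ JC (Stt w wx wy wxx wxy wyx wyy) r t /\
  JC (St w wx wy) r t /\ JC (fun r t => pol wx r t ^ 2 + pol wy r t ^ 2) r t.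
Proof.
  intros (H1 & H2 & H3 & H4 & H5 & H6 & H7 & H8 & H9 & H10 & H11 & H12 & H13 & H14) Hr.
  unfold Sr, Srr, Stt, St. repeat split; jc Rr.
Qed.


Lemma Rint_gt f a b c : a < b -> contab f a b -> (forall x, a <= x <= b -> c < f x) ->
  c * (b - a) < Rint f a b.
Proof.
  intros Hab Hf H.
  destruct (continuity_ab_min f a b ltac:(lra) Hf) as [m [Hm1 Hm2]].
  apply Rlt_le_trans with (f m * (b - a)).
  { apply Rmult_lt_compat_r; [lra| apply H; auto]. }
  rewrite <- Rint_const. apply Rint_le; try lra. apply contab_const. auto. auto.
Qed.

Lemma Rint_ext f g a b : (forall x, f x = g x) -> Rint f a b = Rint g a b.
Proof. intros H. f_equal. apply functional_extensionality; auto. Qed.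

Definition PP (u v : R -> R -> R) r t := pol u r t ^ 2 + pol v r t ^ 2.
Definition Pr u v ux uy vx vy r t := Sr u ux uy r t + Sr v vx vy r t.
Definition Prr u v ux uy vx vy uxx uxy uyx uyy vxx vxy vyx vyy r t :=
  Srr u ux uy uxx uxy uyx uyy r t + Srr v vx vy vxx vxy vyx vyy r t.
Definition Pt u v ux uy vx vy r t := St u ux uy r t + St v vx vy r t.
Definition Ptt u v ux uy vx vy uxx uxy uyx uyy vxx vxy vyx vyy r t :=
  Stt u ux uy uxx uxy uyx uyy r t + Stt v vx vy vxx vxy vyx vyy r t.
Definition Dp (ux uy vx vy : R -> R -> R) r t :=
  pol ux r t ^ 2 + pol uy r t ^ 2 + pol vx r t ^ 2 + pol vy r t ^ 2.

Lemma JC_all Rr u v ux uy vx vy uxx uxy uyx uyy vxx vxy vyx vyy r t :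
  C2comp Rr u ux uy uxx uxy uyx uyy -> C2comp Rr v vx vy vxx vxy vyx vyy -> 1 < r < Rr ->
  JC (PP u v) r t /\ JC (Pr u v ux uy vx vy) r t /\
  JC (Prr u v ux uy vx vy uxx uxy uyx uyy vxx vxy vyx vyy) r t /\
  JC (Ptt u v ux uy vx vy uxx uxy uyx uyy vxx vxy vyx vyy) r t /\
  JC (Dp ux uy vx vy) r t.
Proof.
  intros Cu Cv Hr.
  destruct (JC_comp Rr u ux uy uxx uxy uyx uyy r t Cu Hr) as (A1 & A2 & A3 & A4 & A5 & A6).
  destruct (JC_comp Rr v vx vy vxx vxy vyx vyy r t Cv Hr) as (B1 & B2 & B3 & B4 & B5 & B6).
  destruct Cu as (H1 & H2 & H3 & H4 & H5 & _). destruct Cv as (G1 & G2 & G3 & G4 & G5 & _).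
  split; [|split; [|split; [|split]]].
  1-4: unfold PP, Pr, Prr, Ptt; apply JC_plus; auto.
  unfold Dp. jc Rr.
Qed.

Lemma JC_all_contab Rr u v ux uy vx vy uxx uxy uyx uyy vxx vxy vyx vyy r :
  C2comp Rr u ux uy uxx uxy uyx uyy -> C2comp Rr v vx vy vxx vxy vyx vyy -> 1 < r < Rr ->
  contab (PP u v r) 0 (2 * PI) /\ contab (Pr u v ux uy vx vy r) 0 (2 * PI) /\
  contab (Prr u v ux uy vx vy uxx uxy uyx uyy vxx vxy vyx vyy r) 0 (2 * PI) /\
  contab (Ptt u v ux uy vx vy uxx uxy uyx uyy vxx vxy vyx vyy r) 0 (2 * PI) /\
  contab (Dp ux uy vx vy r) 0 (2 * PI).
Proof.
  intros Cu Cv Hr.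
  repeat split; apply JC_contab; intros t _;
    destruct (JC_all Rr u v ux uy vx vy uxx uxy uyx uyy vxx vxy vyx vyy r t Cu Cv Hr) as (A1 & A2 & A3 & A4 & A5); auto.
Qed.

Lemma KEY Rr u v ux uy vx vy uxx uxy uyx uyy vxx vxy vyx vyy r :
  C2comp Rr u ux uy uxx uxy uyx uyy -> C2comp Rr v vx vy vxx vxy vyx vyy -> 1 < r < Rr ->
  Rint (fun t => Pr u v ux uy vx vy r t + r * Prr u v ux uy vx vy uxx uxy uyx uyy vxx vxy vyx vyy r t) 0 (2 * PI)
  = 2 * r * Rint (Dp ux uy vx vy r) 0 (2 * PI).
Proof.
  intros Cu Cv Hr.
  pose proof PI_RGT_0 as HPI.
  destruct (JC_all_contab Rr u v ux uy vx vy uxx uxy uyx uyy vxx vxy vyx vyy r Cu Cv Hr) as (C1 & C2 & C3 & C4 & C5).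
  assert (Hrne : r <> 0) by lra.
  apply Rmult_eq_reg_l with r; auto.
  rewrite <- Rint_scal; try lra.
  2:{ apply contab_plus; auto. apply contab_mult; auto. apply contab_const. }
  rewrite (Rint_ext _ (fun t => (2 * r ^ 2) * Dp ux uy vx vy r t + (-1) * Ptt u v ux uy vx vy uxx uxy uyx uyy vxx vxy vyx vyy r t)).
  2:{ intros t. pose proof (comp_ident Rr u ux uy uxx uxy uyx uyy r t Cu Hr).
      pose proof (comp_ident Rr v vx vy vxx vxy vyx vyy r t Cv Hr).
      unfold Pr, Prr, Ptt, Dp. lra. }
  rewrite Rint_lin; try lra; auto.
  2:{ apply contab_mult; auto. apply contab_const. }
  rewrite Rint_scal; try lra; auto.
  rewrite (FTC_gen (Pt u v ux uy vx vy r) (Ptt u v ux uy vx vy uxx uxy uyx uyy vxx vxy vyx vyy r) 0 (2 * PI)); try lra; auto.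
  - unfold Pt, St, pol. rewrite cos_2PI, sin_2PI, cos_0, sin_0. ring.
  - intros t _. unfold Pt, Ptt. apply dpl_plus.
    apply (d_t_St Rr u ux uy uxx uxy uyx uyy); auto.
    apply (d_t_St Rr v vx vy vxx vxy vyx vyy); auto.
Qed.


Lemma sqrt_gt1 x : 0 <= x -> 1 < sqrt x -> 1 < x.
Proof.
  intros H0 H. destruct (Rle_dec x 1) as [H1|H1]; [|lra].
  exfalso. pose proof (sqrt_le_1_alt _ _ H1). rewrite sqrt_1 in H2. lra.
Qed.

Lemma sqrt_lt_sq x e : 0 <= x -> 0 <= e -> sqrt x < 1 + e -> x < (1 + e) ^ 2.
Proof.
  intros H0 He H. rewrite <- (sqrt_sqrt x H0). pose proof (sqrt_pos x). simpl. nra.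
Qed.

Lemma jac_pos a b c d : a * d - b * c > 0 -> 0 < a ^ 2 + b ^ 2 + c ^ 2 + d ^ 2.
Proof.
  intros H. replace (a ^ 2 + b ^ 2 + c ^ 2 + d ^ 2) with ((a - d) ^ 2 + (b + c) ^ 2 + 2 * (a * d - b * c)) by ring.
  pose proof (pow2_ge_0 (a - d)). pose proof (pow2_ge_0 (b + c)). lra.
Qed.

Theorem mainTheorem6 (Rr : R) (u v ux uy vx vy : R -> R -> R) :
  1 < Rr -> in_H_star Rr u v ux uy vx vy ->
  exists dU : R -> R,
    (forall rho, 1 < rho < Rr -> derivable_pt_lim (U_mean u v) rho (dU rho)) /\
    (forall r1 r2, 1 < r1 -> r1 < r2 -> r2 < Rr -> r1 * dU r1 < r2 * dU r2) /\
    (forall rho, 1 < rho < Rr -> 1 < U_mean u v rho) /\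
    exists dU1 : R,
      limit1_in (fun rho => rho * dU rho) (fun rho => 1 < rho < Rr) dU1 1 /\
      0 <= dU1 /\
      (forall rho, 1 < rho < Rr ->
         limit1_in (fun a => area_int ux uy vx vy a rho) (fun a => 1 < a < rho)
                   (rho * dU rho - dU1) 1).
Proof.
  intros HRr (Hu & Hv & Hinj & Hhom & Hjac & Hout & Hbd).
  destruct (C2comp_of Rr u ux uy Hu) as (uxx & uxy & uyx & uyy & Cu).
  destruct (C2comp_of Rr v vx vy Hv) as (vxx & vxy & vyx & vyy & Cv).
  pose proof PI_RGT_0 as HPI.
  set (dU := fun r => / (2 * PI) * Rint (Pr u v ux uy vx vy r) 0 (2 * PI)).
  set (W' := fun r => / PI * (r * Rint (Dp ux uy vx vy r) 0 (2 * PI))).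
  assert (HUd : forall r, 1 < r < Rr -> derivable_pt_lim (U_mean u v) r (dU r)).
  { intros r Hr. change (U_mean u v) with (fun rho => / (2 * PI) * Rint (PP u v rho) 0 (2 * PI)).
    unfold dU. eapply dpl_eq. apply dpl_mult. apply dpl_const.
    apply (diff_int (PP u v) (Pr u v ux uy vx vy) r 1 Rr); try lra.
    - intros r' t Hr'. unfold PP, Pr. apply dpl_plus.
      apply (d_r_sq Rr u ux uy uxx uxy uyx uyy); auto.
      apply (d_r_sq Rr v vx vy vxx vxy vyx vyy); auto.
    - intros r' t Hr'. apply (JC_all Rr u v ux uy vx vy uxx uxy uyx uyy vxx vxy vyx vyy r' t); auto.
    - intros r' t Hr'. apply (JC_all Rr u v ux uy vx vy uxx uxy uyx uyy vxx vxy vyx vyy r' t); auto.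
    - cbv beta. ring. }
  assert (HdUd : forall r, 1 < r < Rr -> derivable_pt_lim dU r
            (/ (2 * PI) * Rint (Prr u v ux uy vx vy uxx uxy uyx uyy vxx vxy vyx vyy r) 0 (2 * PI))).
  { intros r Hr. unfold dU. eapply dpl_eq. apply dpl_mult. apply dpl_const.
    apply (diff_int (Pr u v ux uy vx vy) (Prr u v ux uy vx vy uxx uxy uyx uyy vxx vxy vyx vyy) r 1 Rr); try lra.
    - intros r' t Hr'. unfold Pr, Prr. apply dpl_plus.
      apply (d_r_Sr Rr u ux uy uxx uxy uyx uyy); auto.
      apply (d_r_Sr Rr v vx vy vxx vxy vyx vyy); auto.
    - intros r' t Hr'. apply (JC_all Rr u v ux uy vx vy uxx uxy uyx uyy vxx vxy vyx vyy r' t); auto.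
    - intros r' t Hr'. apply (JC_all Rr u v ux uy vx vy uxx uxy uyx uyy vxx vxy vyx vyy r' t); auto.
    - cbv beta. ring. }
  assert (HWd : forall r, 1 < r < Rr -> derivable_pt_lim (fun r => r * dU r) r (W' r)).
  { intros r Hr. eapply dpl_eq. apply dpl_mult. apply dpl_id. apply HdUd; auto.
    destruct (JC_all_contab Rr u v ux uy vx vy uxx uxy uyx uyy vxx vxy vyx vyy r Cu Cv Hr) as (C1 & C2 & C3 & C4 & C5).
    unfold W'. replace (/ PI * (r * Rint (Dp ux uy vx vy r) 0 (2 * PI))) with (/ (2 * PI) * (2 * r * Rint (Dp ux uy vx vy r) 0 (2 * PI))) by (field; lra).
    rewrite <- (KEY Rr u v ux uy vx vy uxx uxy uyx uyy vxx vxy vyx vyy r); auto.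
    rewrite Rint_lin; auto; try lra. unfold dU. field. lra. }
  assert (HW'pos : forall r, 1 < r < Rr -> 0 < W' r).
  { intros r Hr. unfold W'.
    destruct (JC_all_contab Rr u v ux uy vx vy uxx uxy uyx uyy vxx vxy vyx vyy r Cu Cv Hr) as (C1 & C2 & C3 & C4 & C5).
    pose proof (Rint_gt (Dp ux uy vx vy r) 0 (2 * PI) 0 ltac:(lra) C5) as K.
    assert (0 < Rint (Dp ux uy vx vy r) 0 (2 * PI)).
    { rewrite Rmult_0_l in K. apply K. intros t _.
      pose proof (Hjac _ _ (pol_ann Rr r t Hr)). unfold Dp, pol. apply jac_pos; auto. }
    apply Rmult_lt_0_compat. apply Rinv_0_lt_compat; lra. apply Rmult_lt_0_compat; lra. }
  assert (HWinc : forall r1 r2, 1 < r1 -> r1 < r2 -> r2 < Rr -> r1 * dU r1 < r2 * dU r2).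
  { intros r1 r2 H1 H2 H3.
    destruct (MVT_cor2 (fun r => r * dU r) W' r1 r2 H2) as [c [Ec Hc]].
    { intros c Hc. apply HWd; lra. }
    pose proof (HW'pos c ltac:(lra)). nra. }
  assert (HUform : forall r, U_mean u v r = / (2 * PI) * Rint (PP u v r) 0 (2 * PI)) by (intros; reflexivity).
  assert (HU1 : forall r, 1 < r < Rr -> 1 < U_mean u v r).
  { intros r Hr. rewrite HUform.
    destruct (JC_all_contab Rr u v ux uy vx vy uxx uxy uyx uyy vxx vxy vyx vyy r Cu Cv Hr) as (C1 & C2 & C3 & C4 & C5).
    pose proof (Rint_gt (PP u v r) 0 (2 * PI) 1 ltac:(lra) C1) as K.
    assert (1 * (2 * PI - 0) < Rint (PP u v r) 0 (2 * PI)).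
    { apply K. intros t _. unfold PP, pol. apply sqrt_gt1.
      pose proof (pow2_ge_0 (u (r * cos t) (r * sin t))). pose proof (pow2_ge_0 (v (r * cos t) (r * sin t))). lra.
      apply Hout. apply pol_ann; auto. }
    apply Rmult_lt_reg_l with (2 * PI). lra.
    rewrite <- Rmult_assoc, Rinv_r by lra. lra. }
  assert (HW0 : forall r, 1 < r < Rr -> 0 <= r * dU r).
  { intros r0 Hr0. destruct (Rle_dec 0 (r0 * dU r0)) as [|Hneg]; auto. exfalso.
    set (c := U_mean u v r0 - 1).
    assert (Hc : 0 < c) by (unfold c; pose proof (HU1 r0 Hr0); lra).
    assert (Hmono : forall r, 1 < r < r0 -> U_mean u v r0 < U_mean u v r).
    { intros r Hr. destruct (MVT_cor2 (U_mean u v) dU r r0 ltac:(lra)) as [xi [Exi Hxi]].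
      { intros x Hx. apply HUd. lra. }
      pose proof (HWinc xi r0 ltac:(lra) ltac:(lra) ltac:(lra)).
      assert (dU xi < 0) by nra. nra. }
    set (e := Rmin 1 (c / 6)).
    assert (He : 0 < e) by (unfold e; apply Rmin_pos; lra).
    assert (He1 : e <= 1) by apply Rmin_l. assert (He2 : e <= c / 6) by apply Rmin_r.
    destruct (Hbd e He) as [d [Hd Pd]].
    set (r := Rmin (1 + d / 2) ((1 + r0) / 2)).
    assert (Hr1 : r <= 1 + d / 2) by apply Rmin_l. assert (Hr2 : r <= (1 + r0) / 2) by apply Rmin_r.
    assert (Hr : 1 < r < r0).
    { split; [unfold r; apply Rmin_glb_lt; lra | lra]. }
    pose proof (Hmono r Hr) as Hm.
    assert (Hup : U_mean u v r <= 1 + c / 2).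
    { rewrite HUform.
      destruct (JC_all_contab Rr u v ux uy vx vy uxx uxy uyx uyy vxx vxy vyx vyy r Cu Cv ltac:(lra)) as (C1 & C2 & C3 & C4 & C5).
      assert (Rint (PP u v r) 0 (2 * PI) <= Rint (fun _ => 1 + c / 2) 0 (2 * PI)).
      { apply Rint_le; auto. lra. apply contab_const.
        intros t _. unfold PP, pol.
        assert (Ha : ann 1 Rr (r * cos t) (r * sin t)) by (apply pol_ann; lra).
        assert (Hn : sqrt ((r * cos t) ^ 2 + (r * sin t) ^ 2) < 1 + d) by (rewrite pol_norm; lra).
        pose proof (Pd _ _ Ha Hn) as Q.
        pose proof (Rle_abs (sqrt (u (r * cos t) (r * sin t) ^ 2 + v (r * cos t) (r * sin t) ^ 2) - 1)).
        pose proof (pow2_ge_0 (u (r * cos t) (r * sin t))). pose proof (pow2_ge_0 (v (r * cos t) (r * sin t))).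
        pose proof (sqrt_lt_sq (u (r * cos t) (r * sin t) ^ 2 + v (r * cos t) (r * sin t) ^ 2) e ltac:(lra) ltac:(lra) ltac:(lra)).
        assert ((1 + e) ^ 2 <= 1 + c / 2) by nra. lra. }
      rewrite Rint_const in H.
      apply Rmult_le_reg_l with (2 * PI). lra.
      rewrite <- Rmult_assoc, Rinv_r by lra. lra. }
    unfold c in *. lra. }
  set (E := fun y => exists r, 1 < r < Rr /\ y = - (r * dU r)).
  destruct (completeness E) as [m [Hub Hlub]].
  { exists 0. intros y [r [Hr ->]]. pose proof (HW0 r Hr). lra. }
  { exists (- (((1 + Rr) / 2) * dU ((1 + Rr) / 2))). exists ((1 + Rr) / 2). split; auto. lra. }
  assert (HL1 : forall r, 1 < r < Rr -> - m <= r * dU r).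
  { intros r Hr. assert (E (- (r * dU r))) by (exists r; auto). pose proof (Hub _ H). lra. }
  assert (HL2 : forall eps, 0 < eps -> exists r, 1 < r < Rr /\ r * dU r < - m + eps).
  { intros eps Heps. destruct (classic (exists r, 1 < r < Rr /\ r * dU r < - m + eps)) as [H|H]; auto.
    exfalso. assert (m <= m - eps); [|lra]. apply Hlub. intros y [r [Hr ->]].
    destruct (Rle_dec (- (r * dU r)) (m - eps)) as [|n]; auto. exfalso; apply H; exists r; split; auto; lra. }
  assert (Hm0 : m <= 0).
  { apply Hlub. intros y [r [Hr ->]]. pose proof (HW0 r Hr). lra. }
  assert (HW'c : forall r, 1 < r < Rr -> continuity_pt W' r).
  { intros r Hr. unfold W'. apply (continuity_pt_mult (fun _ => / PI) (fun r => r * Rint (Dp ux uy vx vy r) 0 (2 * PI))).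
    apply continuity_pt_const. intros ? ?; auto.
    apply (continuity_pt_mult (fun r => r) (fun r => Rint (Dp ux uy vx vy r) 0 (2 * PI))).
    apply derivable_continuous_pt. apply derivable_pt_id.
    apply (cont_int _ r 1 Rr); try lra. intros r' t Hr'.
    apply (JC_all Rr u v ux uy vx vy uxx uxy uyx uyy vxx vxy vyx vyy r' t); auto. }
  exists dU. split; [exact HUd|]. split; [exact HWinc|]. split; [exact HU1|].
  exists (- m). split; [|split; [lra|]].
  - intros eps Heps. destruct (HL2 eps Heps) as [r1 [Hr1 Hw1]].
    exists (r1 - 1). split; [lra|]. intros x [Hx Hdx]. simpl in *. unfold Rdist in *.
    rewrite Rabs_pos_eq in Hdx by lra.
    pose proof (HL1 x Hx). pose proof (HWinc x r1 ltac:(lra) ltac:(lra) ltac:(lra)).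
    rewrite Rabs_pos_eq; lra.
  - intros rho Hrho eps Heps. destruct (HL2 eps Heps) as [r1 [Hr1 Hw1]].
    exists (r1 - 1). split; [lra|]. intros a [Ha Hda]. simpl in *. unfold Rdist in *.
    rewrite Rabs_pos_eq in Hda by lra.
    assert (Harea : area_int ux uy vx vy a rho = rho * dU rho - a * dU a).
    { change (area_int ux uy vx vy a rho) with (/ PI * Rint (fun r => r * Rint (Dp ux uy vx vy r) 0 (2 * PI)) a rho).
      assert (Cg : contab (fun r => r * Rint (Dp ux uy vx vy r) 0 (2 * PI)) a rho).
      { intros x Hx. apply (continuity_pt_mult (fun r => r) (fun r => Rint (Dp ux uy vx vy r) 0 (2 * PI))).
        apply derivable_continuous_pt. apply derivable_pt_id.
        apply (cont_int _ x 1 Rr); try lra. intros r' t Hr'.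
        apply (JC_all Rr u v ux uy vx vy uxx uxy uyx uyy vxx vxy vyx vyy r' t); auto. }
      rewrite <- Rint_scal; [|lra|exact Cg].
      change (Rint W' a rho = rho * dU rho - a * dU a).
      apply (FTC_gen (fun r => r * dU r) W' a rho). lra.
      intros x Hx; apply HWd; lra.
      intros x Hx; apply HW'c; lra. }
    rewrite Harea. pose proof (HL1 a ltac:(lra)). pose proof (HWinc a r1 ltac:(lra) ltac:(lra) ltac:(lra)).
    replace (rho * dU rho - a * dU a - (rho * dU rho - - m)) with (- (a * dU a - - m)) by ring.
    rewrite Rabs_Ropp, Rabs_pos_eq; lra.
Qed.
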